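(* For every positive integer $n$, let $H(n)=\sum_{i=1}^n \frac{1}{i}$ denote the $n$-th harmonic number and let $\gamma$ denote the Euler–Mascheroni constant. Then \[ -\frac{1}{12n^2+\frac{2(7-12\gamma)}{2\gamma-1}}\le H(n)-\ln n-\frac{1}{2n}-\gamma<-\frac{1}{12n^2+\frac{6}{5}}, \] with equality in the left-hand inequality if and only if $n=1$. Moreover, the constants $\frac{2(7-12\gamma)}{2\gamma-1}$ and $\frac{6}{5}$ are the best possible: the former cannot be replaced by any larger constant and the latter cannot be replaced by any smaller constant while keeping the respective inequality valid for all positive integers $n$.
   Context: $\gamma=\lim_{n\to\infty}\bigl(H(n)-\ln n\bigr)=0.57721566\ldots$ is the Euler–Mascheroni constant; $\ln$ is the natural logarithm. *)

(* Defs.v *)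
From Stdlib Require Import Reals.
From Coquelicot Require Import Coquelicot.
Open Scope R_scope.

Fixpoint harmonic (n : nat) : R :=
  match n with
  | O => 0
  | S k => harmonic k + / INR (S k)
  end.

Definition euler_gamma : R :=
  real (Lim_seq (fun n => harmonic n - ln (INR n))).

Definition harm_err (n : nat) : R :=
  harmonic n - ln (INR n) - / (2 * INR n) - euler_gamma.

Definition const_a : R := 2 * (7 - 12 * euler_gamma) / (2 * euler_gamma - 1).

(* Main.v *)
Require Import Defs.
From Stdlib Require Import Reals Lra Psatz Lia.
From Coquelicot Require Import Coquelicot.
Open Scope R_scope.

Lemma ln_lo (y:R) : 0 <= y < 1 -> 2*(y + y^3/3 + y^5/5 + y^7/7) <= ln(1+y) - ln(1-y).
Proof.
  intros [H0 H1].
  set (f := fun z => ln (1+z) - ln (1-z) - 2*(z + z^3/3 + z^5/5 + z^7/7)).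
  assert (Hd : forall z, -1 < z < 1 -> is_derive f z (2*z^8/(1-z^2))).
  { intros z Hz. unfold f. auto_derive.
    - repeat split; lra.
    - field. repeat split; nra. }
  destruct (MVT_gen f 0 y (fun z => 2*z^8/(1-z^2))) as [c [Hc Heq]].
  - intros z Hz. apply Hd. rewrite Rmin_left in Hz by lra. rewrite Rmax_right in Hz by lra. lra.
  - intros z Hz. rewrite Rmin_left in Hz by lra. rewrite Rmax_right in Hz by lra.
    apply continuity_pt_filterlim. apply (ex_derive_continuous f z). exists (2*z^8/(1-z^2)). apply Hd. lra.
  - rewrite Rmin_left in Hc by lra. rewrite Rmax_right in Hc by lra.
    assert (0 <= 2*c^8/(1-c^2)).
    { apply Rmult_le_pos. pose proof (pow2_ge_0 (c^4)). replace (c^8) with ((c^4)^2) by ring. nra.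
      apply Rlt_le, Rinv_0_lt_compat. nra. }
    unfold f in Heq. rewrite !Rplus_0_r, Rminus_0_r, ln_1 in Heq.
    replace (0^3) with 0 in Heq by ring. replace (0^5) with 0 in Heq by ring. replace (0^7) with 0 in Heq by ring.
    nra.
Qed.

Lemma ln_hi (y:R) : 0 <= y < 1 -> ln(1+y) - ln(1-y) <= 2*(y + y^3/3 + y^5/(5*(1-y^2))).
Proof.
  intros [H0 H1].
  set (f := fun z => 2*(z + z^3/3 + z^5/(5*(1-z^2))) - (ln (1+z) - ln (1-z))).
  assert (Hd : forall z, -1 < z < 1 -> is_derive f z (4*z^6/(5*(1-z^2)^2))).
  { intros z Hz. unfold f. auto_derive.
    - repeat split; try lra. nra.
    - field. repeat split; nra. }
  destruct (MVT_gen f 0 y (fun z => 4*z^6/(5*(1-z^2)^2))) as [c [Hc Heq]].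
  - intros z Hz. apply Hd. rewrite Rmin_left in Hz by lra. rewrite Rmax_right in Hz by lra. lra.
  - intros z Hz. rewrite Rmin_left in Hz by lra. rewrite Rmax_right in Hz by lra.
    apply continuity_pt_filterlim. apply (ex_derive_continuous f z). exists (4*z^6/(5*(1-z^2)^2)). apply Hd. lra.
  - rewrite Rmin_left in Hc by lra. rewrite Rmax_right in Hc by lra.
    assert (0 <= 4*c^6/(5*(1-c^2)^2)).
    { apply Rmult_le_pos. pose proof (pow2_ge_0 (c^3)). replace (c^6) with ((c^3)^2) by ring. nra.
      apply Rlt_le, Rinv_0_lt_compat. assert (0 < 1 - c^2) by nra. nra. }
    assert (Hf0 : f 0 = 0) by (unfold f; rewrite Rplus_0_r, Rminus_0_r, ln_1; field).
    rewrite Hf0 in Heq. assert (Hfy : 0 <= f y) by nra. unfold f in Hfy. lra.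
Qed.

Lemma ln_xform (x : R) : 0 < x -> ln (x+1) - ln x = ln (1 + /(2*x+1)) - ln (1 - /(2*x+1)).
Proof.
  intros Hx.
  assert (Hy : 0 < /(2*x+1) < 1).
  { split. apply Rinv_0_lt_compat; lra. rewrite <- Rinv_1. apply Rinv_lt_contravar; lra. }
  rewrite <- !ln_div by lra. f_equal. field. lra.
Qed.

Lemma Lx_hi (x : R) : 0 < x ->
  ln (x+1) - ln x <= (2/(2*x+1) + 2/(3*(2*x+1)^3) + 1/(10*x*(x+1)*(2*x+1)^3)).
Proof.
  intros Hx. rewrite (ln_xform x Hx).
  assert (Hy : 0 < /(2*x+1) < 1).
  { split. apply Rinv_0_lt_compat; lra. rewrite <- Rinv_1. apply Rinv_lt_contravar; lra. }
  pose proof (ln_hi (/(2*x+1)) ltac:(lra)) as H.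
  replace (2/(2*x+1) + 2/(3*(2*x+1)^3) + 1/(10*x*(x+1)*(2*x+1)^3))
    with (2 * (/ (2 * x + 1) + (/ (2 * x + 1)) ^ 3 / 3 + (/ (2 * x + 1)) ^ 5 / (5 * (1 - (/ (2 * x + 1)) ^ 2)))).
  exact H.
  field. repeat split; try lra. all: nra.
Qed.

Lemma Lx_lo (x : R) : 0 < x ->
  (2/(2*x+1) + 2/(3*(2*x+1)^3) + 2/(5*(2*x+1)^5) + 2/(7*(2*x+1)^7)) <= ln (x+1) - ln x.
Proof.
  intros Hx. rewrite (ln_xform x Hx).
  assert (Hy : 0 < /(2*x+1) < 1).
  { split. apply Rinv_0_lt_compat; lra. rewrite <- Rinv_1. apply Rinv_lt_contravar; lra. }
  pose proof (ln_lo (/(2*x+1)) ltac:(lra)) as H.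
  replace (2/(2*x+1) + 2/(3*(2*x+1)^3) + 2/(5*(2*x+1)^5) + 2/(7*(2*x+1)^7))
    with (2 * (/ (2 * x + 1) + (/ (2 * x + 1)) ^ 3 / 3 + (/ (2 * x + 1)) ^ 5 / 5 + (/ (2 * x + 1)) ^ 7 / 7)).
  exact H.
  field. lra.
Qed.

Lemma PA (x : R) : 1 <= x -> 0 < /(2*x) + /(2*(x+1)) - (2/(2*x+1) + 2/(3*(2*x+1)^3) + 1/(10*x*(x+1)*(2*x+1)^3)) - (/(12*x^2+6/5) - /(12*(x+1)^2+6/5)).
Proof.
  intros Hx. remember (x - 1) as s eqn:Hse. assert (Hs : 0 <= s) by lra.
  assert (Hxs : x = s + 1) by lra. clear Hse Hx. subst x.
  assert (Hd : 0 < (12*(s+1)^2+(6/5))*(12*((s+1)+1)^2+(6/5))*(2*(s+1)+1)^3*(s+1)*((s+1)+1)) by (repeat apply Rmult_lt_0_compat; try apply pow_lt; nra).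
  assert (He : (/(2*(s+1)) + /(2*((s+1)+1)) - (2/(2*(s+1)+1) + 2/(3*(2*(s+1)+1)^3) + 1/(10*(s+1)*((s+1)+1)*(2*(s+1)+1)^3)) - (/(12*(s+1)^2+6/5) - /(12*((s+1)+1)^2+6/5))) * ((12*(s+1)^2+(6/5))*(12*((s+1)+1)^2+(6/5))*(2*(s+1)+1)^3*(s+1)*((s+1)+1)) = (5952/125) + (1548/25)*s^1 + (516/25)*s^2)
    by (field; repeat split; nra).
  apply (Rmult_lt_reg_r _ _ _ Hd). rewrite Rmult_0_l, He.
  pose proof (pow_le s 2 Hs). pose proof (pow_le s 3 Hs). lra.
Qed.

Lemma PB (x : R) : 2 <= x -> 0 <= (/(12*x^2+1) - /(12*(x+1)^2+1)) - (/(2*x) + /(2*(x+1)) - (2/(2*x+1) + 2/(3*(2*x+1)^3) + 2/(5*(2*x+1)^5) + 2/(7*(2*x+1)^7))).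
Proof.
  intros Hx. remember (x - 2) as s eqn:Hse. assert (Hs : 0 <= s) by lra.
  assert (Hxs : x = s + 2) by lra. clear Hse Hx. subst x.
  assert (Hd : 0 < (12*(s+2)^2+(1))*(12*((s+2)+1)^2+(1))*(2*(s+2)+1)^7*(s+2)*((s+2)+1)) by (repeat apply Rmult_lt_0_compat; try apply pow_lt; nra).
  assert (He : ((/(12*(s+2)^2+1) - /(12*((s+2)+1)^2+1)) - (/(2*(s+2)) + /(2*((s+2)+1)) - (2/(2*(s+2)+1) + 2/(3*(2*(s+2)+1)^3) + 2/(5*(2*(s+2)+1)^5) + 2/(7*(2*(s+2)+1)^7)))) * ((12*(s+2)^2+(1))*(12*((s+2)+1)^2+(1))*(2*(s+2)+1)^7*(s+2)*((s+2)+1)) = (161107/2) + (6698968/21)*s^1 + (18183856/35)*s^2 + (9743408/21)*s^3 + (26379704/105)*s^4 + (595008/7)*s^5 + (1849408/105)*s^6 + (2048)*s^7 + (512/5)*s^8)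
    by (field; repeat split; nra).
  apply (Rmult_le_reg_r _ _ _ Hd). rewrite Rmult_0_l, He.
  pose proof (pow_le s 2 Hs). pose proof (pow_le s 3 Hs). pose proof (pow_le s 4 Hs). pose proof (pow_le s 5 Hs). pose proof (pow_le s 6 Hs). pose proof (pow_le s 7 Hs). pose proof (pow_le s 8 Hs). pose proof (pow_le s 9 Hs). lra.
Qed.

Lemma PC (x : R) : 1 <= x -> 0 <= (/(12*x^2+6/5) - /(12*(x+1)^2+6/5)) + (/(4*(x*(x+1)*(x+2)*(x+3)*(x+4))) - /(4*((x+1)*(x+1+1)*(x+1+2)*(x+1+3)*(x+1+4)))) - (/(2*x) + /(2*(x+1)) - (2/(2*x+1) + 2/(3*(2*x+1)^3) + 2/(5*(2*x+1)^5) + 2/(7*(2*x+1)^7))).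
Proof.
  intros Hx. remember (x - 1) as s eqn:Hse. assert (Hs : 0 <= s) by lra.
  assert (Hxs : x = s + 1) by lra. clear Hse Hx. subst x.
  assert (Hd : 0 < (12*(s+1)^2+(6/5))*(12*((s+1)+1)^2+(6/5))*(2*(s+1)+1)^7*(s+1)*((s+1)+1)*((s+1)+2)*((s+1)+3)*((s+1)+4)*((s+1)+5)) by (repeat apply Rmult_lt_0_compat; try apply pow_lt; nra).
  assert (He : ((/(12*(s+1)^2+6/5) - /(12*((s+1)+1)^2+6/5)) + (/(4*((s+1)*((s+1)+1)*((s+1)+2)*((s+1)+3)*((s+1)+4))) - /(4*(((s+1)+1)*((s+1)+1+1)*((s+1)+1+2)*((s+1)+1+3)*((s+1)+1+4)))) - (/(2*(s+1)) + /(2*((s+1)+1)) - (2/(2*(s+1)+1) + 2/(3*(2*(s+1)+1)^3) + 2/(5*(2*(s+1)+1)^5) + 2/(7*(2*(s+1)+1)^7)))) * ((12*(s+1)^2+(6/5))*(12*((s+1)+1)^2+(6/5))*(2*(s+1)+1)^7*(s+1)*((s+1)+1)*((s+1)+2)*((s+1)+3)*((s+1)+4)*((s+1)+5)) = (54268299/175) + (756290682/125)*s^1 + (25656657966/875)*s^2 + (62767164816/875)*s^3 + (94401725454/875)*s^4 + (13567546188/125)*s^5 + (66380878524/875)*s^6 + (4651208352/125)*s^7 + (11049448296/875)*s^8 + (496112256/175)*s^9 + (66467328/175)*s^10 + (23040)*s^11)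
    by (field; repeat split; nra).
  apply (Rmult_le_reg_r _ _ _ Hd). rewrite Rmult_0_l, He.
  pose proof (pow_le s 2 Hs). pose proof (pow_le s 3 Hs). pose proof (pow_le s 4 Hs). pose proof (pow_le s 5 Hs). pose proof (pow_le s 6 Hs). pose proof (pow_le s 7 Hs). pose proof (pow_le s 8 Hs). pose proof (pow_le s 9 Hs). pose proof (pow_le s 10 Hs). pose proof (pow_le s 11 Hs). pose proof (pow_le s 12 Hs). lra.
Qed.

Definition uu (x : R) : R := /(2*x) + /(2*(x+1)) - (ln (x+1) - ln x).
Definition hh (c x : R) : R := /(12*x^2 + c).
Definition ee (x : R) : R := /(4*(x*(x+1)*(x+2)*(x+3)*(x+4))).

Lemma uA (x : R) : 1 <= x -> hh (6/5) x - hh (6/5) (x+1) < uu x.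
Proof. intros Hx. pose proof (PA x Hx). pose proof (Lx_hi x ltac:(lra)). unfold hh, uu. lra. Qed.

Lemma uB (x : R) : 2 <= x -> uu x <= hh 1 x - hh 1 (x+1).
Proof. intros Hx. pose proof (PB x Hx). pose proof (Lx_lo x ltac:(lra)). unfold hh, uu. lra. Qed.

Lemma uC (x : R) : 1 <= x -> uu x <= (hh (6/5) x + ee x) - (hh (6/5) (x+1) + ee (x+1)).
Proof. intros Hx. pose proof (PC x Hx). pose proof (Lx_lo x ltac:(lra)). unfold hh, uu, ee. lra. Qed.

Lemma hh_pos (c x : R) : 0 < c -> 0 < hh c x.
Proof. intros Hc. unfold hh. apply Rinv_0_lt_compat. nra. Qed.

Lemma hh_decr (c x : R) : 0 < c -> 0 <= x -> hh c (x+1) <= hh c x.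
Proof. intros Hc Hx. unfold hh. apply Rinv_le_contravar; nra. Qed.

Lemma ee_pos (x : R) : 0 < x -> 0 < ee x.
Proof. intros Hx. unfold ee. apply Rinv_0_lt_compat.
  repeat apply Rmult_lt_0_compat; lra. Qed.

Lemma uu_pos (x : R) : 1 <= x -> 0 <= uu x.
Proof. intros Hx. pose proof (uA x Hx). pose proof (hh_decr (6/5) x ltac:(lra) ltac:(lra)). lra. Qed.

Definition Sx (n : nat) : R := harmonic n - ln (INR n) - /(2 * INR n).

Lemma Sx_step (n : nat) : (1 <= n)%nat -> Sx (S n) - Sx n = uu (INR n).
Proof.
  intros Hn. unfold Sx, uu.
  change (harmonic (S n)) with (harmonic n + / INR (S n)).
  rewrite S_INR. assert (1 <= INR n) by (apply (le_INR 1); exact Hn).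
  field. lra.
Qed.

Lemma lim_invS : is_lim_seq (fun n => / INR (S n)) 0.
Proof.
  assert (H : is_lim_seq (fun n => INR (S n)) p_infty).
  { apply (is_lim_seq_incr_1 INR p_infty). exact is_lim_seq_INR. }
  pose proof (is_lim_seq_inv _ _ H) as H2. simpl in H2. apply H2. discriminate.
Qed.

Lemma lim_hh (c : R) : 1 <= c -> is_lim_seq (fun k => hh c (INR k)) 0.
Proof.
  intros Hc. apply is_lim_seq_le_le with (u := fun _ => 0) (w := fun k => / INR (S k)).
  - intros k. split.
    + apply Rlt_le, hh_pos; lra.
    + unfold hh. rewrite S_INR. pose proof (pos_INR k). apply Rinv_le_contravar. lra.
      destruct k. simpl. nra. assert (1 <= INR (S k)) by (apply (le_INR 1); lia). nra.
  - apply is_lim_seq_const.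
  - exact lim_invS.
Qed.

Lemma lim_ee : is_lim_seq (fun k => ee (INR k)) 0.
Proof.
  apply is_lim_seq_incr_1.
  apply is_lim_seq_le_le with (u := fun _ => 0) (w := fun k => / INR (S k)).
  - intros k. rewrite S_INR. pose proof (pos_INR k). split.
    + apply Rlt_le, ee_pos; lra.
    + unfold ee. apply Rinv_le_contravar. lra.
      assert (1 <= (INR k + 1 + 1) * (INR k + 1 + 2) * (INR k + 1 + 3) * (INR k + 1 + 4)).
      { assert (1 <= (INR k + 1 + 1) * (INR k + 1 + 2)) by nra.
        assert (1 <= (INR k + 1 + 1) * (INR k + 1 + 2) * (INR k + 1 + 3)) by nra. nra. }
      nra.
  - apply is_lim_seq_const.
  - exact lim_invS.
Qed.

Lemma tele_ge (s f : nat -> R) (L : R) (n : nat) :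
  is_lim_seq s L -> is_lim_seq f 0 ->
  (forall k, (n <= k)%nat -> f k - f (S k) <= s (S k) - s k) -> f n <= L - s n.
Proof.
  intros Hs Hf Hk.
  assert (Hm : forall m, f n - f (m + n)%nat <= s (m + n)%nat - s n).
  { induction m. simpl; lra. specialize (Hk (m+n)%nat ltac:(lia)). simpl (S m + n)%nat. lra. }
  apply (is_lim_seq_incr_n _ n) in Hs. apply (is_lim_seq_incr_n _ n) in Hf.
  assert (H1 : is_lim_seq (fun m => f n - f (m+n)%nat) (f n - 0)).
  { apply is_lim_seq_minus'. apply is_lim_seq_const. exact Hf. }
  assert (H2 : is_lim_seq (fun m => s (m+n)%nat - s n) (L - s n)).
  { apply is_lim_seq_minus'. exact Hs. apply is_lim_seq_const. }
  pose proof (is_lim_seq_le _ _ _ _ Hm H1 H2) as H. simpl in H. lra.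
Qed.

Lemma tele_le (s f : nat -> R) (L : R) (n : nat) :
  is_lim_seq s L -> is_lim_seq f 0 ->
  (forall k, (n <= k)%nat -> s (S k) - s k <= f k - f (S k)) -> L - s n <= f n.
Proof.
  intros Hs Hf Hk.
  assert (Hm : forall m, s (m + n)%nat - s n <= f n - f (m + n)%nat).
  { induction m. simpl; lra. specialize (Hk (m+n)%nat ltac:(lia)). simpl (S m + n)%nat. lra. }
  apply (is_lim_seq_incr_n _ n) in Hs. apply (is_lim_seq_incr_n _ n) in Hf.
  assert (H1 : is_lim_seq (fun m => f n - f (m+n)%nat) (f n - 0)).
  { apply is_lim_seq_minus'. apply is_lim_seq_const. exact Hf. }
  assert (H2 : is_lim_seq (fun m => s (m+n)%nat - s n) (L - s n)).
  { apply is_lim_seq_minus'. exact Hs. apply is_lim_seq_const. }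
  pose proof (is_lim_seq_le _ _ _ _ Hm H2 H1) as H. simpl in H. lra.
Qed.

Lemma conv : exists L : R, is_lim_seq Sx L /\ euler_gamma = L.
Proof.
  set (a := fun n => Sx (S n)).
  assert (Hinc : forall n, a n <= a (S n)).
  { intro n. unfold a. pose proof (Sx_step (S n) ltac:(lia)).
    assert (1 <= INR (S n)) by (apply (le_INR 1); lia).
    pose proof (uu_pos (INR (S n)) H0). lra. }
  set (g := fun n => a n + hh (6/5) (INR (S n)) + ee (INR (S n))).
  assert (Hg : forall n, g (S n) <= g n).
  { intro n. unfold g, a. pose proof (Sx_step (S n) ltac:(lia)).
    assert (1 <= INR (S n)) by (apply (le_INR 1); lia).
    pose proof (uC (INR (S n)) H0). rewrite (S_INR (S n)). lra. }
  assert (Hg0 : forall n, g n <= g 0%nat).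
  { induction n. lra. pose proof (Hg n). lra. }
  assert (Hb : forall n, a n <= g 0%nat).
  { intro n. pose proof (Hg0 n). unfold g in H |- *.
    assert (0 < INR (S n)) by (apply lt_0_INR; lia).
    pose proof (hh_pos (6/5) (INR (S n)) ltac:(lra)). pose proof (ee_pos _ H0). lra. }
  destruct (ex_finite_lim_seq_incr a (g 0%nat) Hinc Hb) as [L HL].
  exists L. split.
  - apply is_lim_seq_incr_1. exact HL.
  - assert (H : is_lim_seq (fun n => harmonic n - ln (INR n)) L).
    { apply is_lim_seq_incr_1.
      apply is_lim_seq_ext with (fun n => a n + / (2 * INR (S n))).
      { intros n. unfold a, Sx. ring. }
      replace (Finite L) with (Finite (L + 0)) by (f_equal; ring).
      apply is_lim_seq_plus'. exact HL.
      apply is_lim_seq_le_le with (u := fun _ => 0) (w := fun k => / INR (S k)).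
      - intros k. assert (1 <= INR (S k)) by (apply (le_INR 1); lia). split.
        + apply Rlt_le, Rinv_0_lt_compat. lra.
        + apply Rinv_le_contravar; lra.
      - apply is_lim_seq_const.
      - exact lim_invS. }
    unfold euler_gamma. rewrite (is_lim_seq_unique _ _ H). reflexivity.
Qed.

Lemma fin_ineq (b x : R) : b < 6/5 -> 1 <= x -> Rabs b < x -> 49 <= (6/5 - b)*x ->
  hh (6/5) x + ee x <= /(12*x^2+b).
Proof.
  intros Hb Hx Hab Hd. pose proof (Rabs_maj2 b).
  assert (HP : 0 < 12*x^2+b) by nra.
  assert (HQ : 0 < 12*x^2+6/5) by nra.
  assert (Hee : ee x <= /(4*x^5)).
  { unfold ee. apply Rinv_le_contravar. apply Rmult_lt_0_compat. lra. apply pow_lt; lra.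
    apply Rmult_le_compat_l. lra.
    replace (x^5) with (x*x*x*x*x) by ring.
    repeat apply Rmult_le_compat; try lra; repeat apply Rmult_le_pos; lra. }
  assert (Hk : /(4*x^5) <= /(12*x^2+b) - /(12*x^2+6/5)).
  { replace (/(12*x^2+b) - /(12*x^2+6/5)) with (/((12*x^2+b)*(12*x^2+6/5)/(6/5-b)))
      by (field; repeat split; lra).
    apply Rinv_le_contravar.
    { apply Rdiv_lt_0_compat. apply Rmult_lt_0_compat; lra. lra. }
    apply (Rmult_le_reg_r (6/5-b)). lra.
    replace ((12*x^2+b)*(12*x^2+6/5)/(6/5-b)*(6/5-b)) with ((12*x^2+b)*(12*x^2+6/5)) by (field; lra).
    assert ((12*x^2+b)*(12*x^2+6/5) <= (12*x^2+6/5)*(12*x^2+6/5)) by (apply Rmult_le_compat_r; lra).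
    assert (HQ14 : 12*x^2+6/5 <= 14*x^2) by nra.
    assert ((12*x^2+6/5)*(12*x^2+6/5) <= 196*x^4).
    { replace (196*x^4) with ((14*x^2)*(14*x^2)) by ring. apply Rmult_le_compat; lra. }
    assert (196*x^4 <= 4*x^5*(6/5-b)).
    { replace (4*x^5*(6/5-b)) with (4*x^4*((6/5-b)*x)) by ring.
      pose proof (pow_le x 4 ltac:(lra)). nra. }
    lra. }
  unfold hh. lra.
Qed.

Theorem theorem1 :
  (forall n : nat, (1 <= n)%nat ->
     - / (12 * INR n ^ 2 + const_a) <= harm_err n /\
     harm_err n < - / (12 * INR n ^ 2 + 6 / 5)) /\
  (forall n : nat, (1 <= n)%nat ->
     (harm_err n = - / (12 * INR n ^ 2 + const_a) <-> n = 1%nat)) /\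
  (forall a : R, a > const_a ->
     exists n : nat, (1 <= n)%nat /\ ~ (- / (12 * INR n ^ 2 + a) <= harm_err n)) /\
  (forall b : R, b < 6 / 5 ->
     exists n : nat, (1 <= n)%nat /\ ~ (harm_err n < - / (12 * INR n ^ 2 + b))).
Proof.
  destruct conv as [L [HS Hgam]].
  assert (Herr : forall n, harm_err n = Sx n - L).
  { intro n. unfold harm_err, Sx. rewrite Hgam. ring. }
  assert (Hup : forall n, (1 <= n)%nat -> hh (6/5) (INR n) < L - Sx n).
  { intros n Hn.
    assert (H1 : hh (6/5) (INR (S n)) <= L - Sx (S n)).
    { apply (tele_ge Sx (fun k => hh (6/5) (INR k))). exact HS. apply lim_hh; lra.
      intros k Hk. rewrite Sx_step by lia. rewrite S_INR.
      assert (1 <= INR k) by (apply (le_INR 1); lia). pose proof (uA (INR k) H). lra. }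
    pose proof (Sx_step n Hn). assert (1 <= INR n) by (apply (le_INR 1); lia).
    pose proof (uA (INR n) H0). rewrite S_INR in H1. lra. }
  assert (Hlo : forall n, (2 <= n)%nat -> L - Sx n <= hh 1 (INR n)).
  { intros n Hn.
    apply (tele_le Sx (fun k => hh 1 (INR k))). exact HS. apply lim_hh; lra.
    intros k Hk. rewrite Sx_step by lia. rewrite S_INR.
    assert (2 <= INR k) by (apply (le_INR 2); lia). pose proof (uB (INR k) H). lra. }
  assert (Htail : forall n, (1 <= n)%nat -> L - Sx n <= hh (6/5) (INR n) + ee (INR n)).
  { intros n Hn.
    apply (tele_le Sx (fun k => hh (6/5) (INR k) + ee (INR k))). exact HS.
    replace (Finite 0) with (Finite (0 + 0)) by (f_equal; ring).
    apply is_lim_seq_plus'. apply lim_hh; lra. exact lim_ee.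
    intros k Hk. rewrite Sx_step by lia. rewrite S_INR.
    assert (1 <= INR k) by (apply (le_INR 1); lia). pose proof (uC (INR k) H). lra. }
  assert (HS1 : Sx 1 = 1/2).
  { unfold Sx. simpl. rewrite ln_1. field. }
  assert (Hgb : 2/13 < 2*L - 1).
  { pose proof (Hup 2%nat ltac:(lia)).
    pose proof (Sx_step 1 ltac:(lia)).
    replace (INR 2) with 2 in H by (simpl; ring).
    replace (INR 1) with 1 in H0 by (simpl; ring).
    pose proof (Lx_hi 1 ltac:(lra)).
    unfold hh, uu in *.
    assert (E1 : /(12*2^2+6/5) = 5/246) by field.
    assert (E2 : /(2*1) = 1/2) by field.
    assert (E3 : /(2*(1+1)) = 1/4) by field.
    assert (E4 : 2/(2*1+1) + 2/(3*(2*1+1)^3) + 1/(10*1*(1+1)*(2*1+1)^3) = 2/3 + 2/81 + 1/540) by field.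
    lra. }
  assert (Hca : 12 + const_a = 2/(2*L-1)).
  { unfold const_a. rewrite Hgam. field. lra. }
  assert (Hcapos : 0 < 12 + const_a).
  { rewrite Hca. apply Rdiv_lt_0_compat; lra. }
  assert (Hca1 : const_a < 1).
  { assert (2/(2*L-1) < 13).
    { apply (Rmult_lt_reg_r (2*L-1)). lra. unfold Rdiv. rewrite Rmult_assoc, Rinv_l by lra. lra. }
    lra. }
  assert (Heq1 : harm_err 1 = - / (12 * INR 1 ^ 2 + const_a)).
  { rewrite Herr, HS1. replace (INR 1) with 1 by reflexivity.
    replace (12 * 1 ^ 2 + const_a) with (12 + const_a) by ring. rewrite Hca. field. lra. }
  assert (Hstrict : forall n, (2 <= n)%nat -> - / (12 * INR n ^ 2 + const_a) < harm_err n).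
  { intros n Hn. rewrite Herr. pose proof (Hlo n Hn). unfold hh in H.
    assert (2 <= INR n) by (apply (le_INR 2); lia).
    assert (/(12 * INR n ^ 2 + 1) < /(12 * INR n ^ 2 + const_a)).
    { apply Rinv_lt_contravar. apply Rmult_lt_0_compat; nra. lra. }
    lra. }
  split; [|split; [|split]].
  - intros n Hn. split.
    + destruct (Nat.eq_dec n 1) as [->|Hne]. rewrite Heq1. lra.
      apply Rlt_le, Hstrict. lia.
    + rewrite Herr. pose proof (Hup n Hn). unfold hh in H. lra.
  - intros n Hn. split.
    + intros H. destruct (Nat.eq_dec n 1) as [->|Hne]. reflexivity.
      pose proof (Hstrict n ltac:(lia)). lra.
    + intros ->. exact Heq1.
  - intros a Ha. exists 1%nat. split. lia. intros H.
    rewrite Heq1 in H. replace (INR 1) with 1 in H by reflexivity.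
    replace (12 * 1 ^ 2 + const_a) with (12 + const_a) in H by ring.
    replace (12 * 1 ^ 2 + a) with (12 + a) in H by ring.
    assert (/(12 + a) < /(12 + const_a)).
    { apply Rinv_lt_contravar. apply Rmult_lt_0_compat; lra. lra. }
    lra.
  - intros b Hb.
    destruct (INR_archimed 1 (49/(6/5-b) + Rabs b + 1) ltac:(lra)) as [n Hn].
    rewrite Rmult_1_r in Hn.
    assert (Hd : 0 < 6/5 - b) by lra.
    assert (H49 : 0 < 49/(6/5-b)) by (apply Rdiv_lt_0_compat; lra).
    pose proof (Rabs_pos b).
    assert (Hn1 : (1 <= n)%nat).
    { assert (INR 0 < INR n) by (simpl; lra). apply INR_lt in H0. lia. }
    exists n. split. exact Hn1. intros H1.
    assert (H49' : 49 <= (6/5 - b) * INR n).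
    { assert (49 = (6/5-b) * (49/(6/5-b))) by (field; lra).
      assert ((6/5-b) * (49/(6/5-b)) <= (6/5-b) * INR n) by (apply Rmult_le_compat_l; lra).
      lra. }
    pose proof (fin_ineq b (INR n) Hb ltac:(lra) ltac:(lra) H49').
    pose proof (Htail n Hn1). rewrite Herr in H1. lra.
Qed.
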